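(* For any $n\ge 1$, the Hochschild lattice $(\mathsf{Tr}(n),\preccurlyeq)$ is extremal.
   Context: A triword of size $n$ is a word $u=u_1\cdots u_n$ with $u_i\in\{0,1,2\}$, $u_1\ne 2$, and such that $u_i=0$ implies $u_j\neq 1$ for all $j>i$; $\mathsf{Tr}(n)$ is their set, ordered componentwise ($u\preccurlyeq v$ iff $u_i\le v_i$ for all $i$); it is a lattice. An element of a finite lattice is join-irreducible (resp. meet-irreducible) if it covers (resp. is covered by) exactly one element. A finite lattice is extremal if the length $k$ of a longest saturated chain from its minimum to its maximum equals both the number of join-irreducible elements and the number of meet-irreducible elements. *)

(* Defs.v *)
From mathcomp Require Import all_boot.
Set Implicit Arguments. Unset Strict Implicit. Unset Printing Implicit Defensive.

(** Words of size n over {0,1,2}; positions are 0-based ('I_n), so the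
    paper's u_1 is the letter at the position i with val i = 0. *)
Definition word (n : nat) := {ffun 'I_n -> 'I_3}.

Definition triword (n : nat) (u : word n) : bool :=
  [forall i : 'I_n, (val i == 0) ==> (val (u i) != 2)] &&
  [forall i : 'I_n, forall j : 'I_n,
     ((i < j) && (val (u i) == 0)) ==> (val (u j) != 1)].

Definition Tr (n : nat) : {set word n} := [set u | triword u].

Definition wle (n : nat) : rel (word n) :=
  fun u v => [forall i : 'I_n, val (u i) <= val (v i)].

Section FinPoset.
Variables (T : finType) (S : {set T}) (le : rel T).

Definition is_partial_order : Prop :=
  (forall x, x \in S -> le x x) /\
  (forall x y, x \in S -> y \in S -> le x y -> le y x -> x = y) /\
  (forall x y z, x \in S -> y \in S -> z \in S -> le x y -> le y z -> le x z).

Definition is_join (x y j : T) : Prop :=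
  [/\ j \in S, le x j, le y j &
      forall z, z \in S -> le x z -> le y z -> le j z].

Definition is_meet (x y m : T) : Prop :=
  [/\ m \in S, le m x, le m y &
      forall z, z \in S -> le z x -> le z y -> le z m].

Definition is_finite_lattice : Prop :=
  [/\ is_partial_order, S != set0,
      forall x y, x \in S -> y \in S -> exists j, is_join x y j &
      forall x y, x \in S -> y \in S -> exists m, is_meet x y m].

Definition covers (y x : T) : bool :=
  [&& x \in S, y \in S, le x y, x != y &
      [forall z, ~~ [&& z \in S, le x z, le z y, z != x & z != y]]].

Definition join_irreducible (x : T) : bool :=
  (x \in S) && (#|[set y | covers x y]| == 1).

Definition meet_irreducible (x : T) : bool :=
  (x \in S) && (#|[set y | covers y x]| == 1).

Definition is_min (b : T) : Prop := b \in S /\ forall x, x \in S -> le b x.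
Definition is_max (t : T) : Prop := t \in S /\ forall x, x \in S -> le x t.

(** A saturated chain from b to t of length k: b = x_0 < x_1 < ... < x_k = t,
    each step a cover; encoded as the sequence [x_1; ...; x_k]. *)
Definition sat_chain (b t : T) (s : seq T) : bool :=
  path (fun x y => covers y x) b s && (last b s == t).

Definition longest_chain_length (k : nat) : Prop :=
  exists b t, [/\ is_min b, is_max t,
    (exists s, sat_chain b t s /\ size s = k) &
    (forall s, sat_chain b t s -> size s <= k)].

Definition extremal : Prop :=
  is_finite_lattice /\
  exists k, [/\ longest_chain_length k,
                #|[set x | join_irreducible x]| = k &
                #|[set x | meet_irreducible x]| = k].
End FinPoset.

(* Main.v *)
Require Import Defs.
From mathcomp Require Import all_boot zify.
Set Implicit Arguments. Unset Strict Implicit. Unset Printing Implicit Defensive.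

Definition wv n (u : word n) (i : 'I_n) : nat := nat_of_ord (u i).

Lemma wv_le2 n (u : word n) i : wv u i <= 2.
Proof. by have := ltn_ord (u i). Qed.

Lemma weqP n (u v : word n) : (forall i, wv u i = wv v i) -> u = v.
Proof. by move=> h; apply/ffunP => i; apply/val_inj; apply: h. Qed.

Lemma wleP n (u v : word n) : reflect (forall i, wv u i <= wv v i) (wle u v).
Proof. exact: forallP. Qed.

Lemma triP n (u : word n) :
  reflect ((forall i : 'I_n, nat_of_ord i = 0 -> wv u i <= 1) /\
           (forall i j : 'I_n, i < j -> wv u i = 0 -> wv u j <> 1)) (triword u).
Proof.
have -> : triword u = [forall i : 'I_n, (nat_of_ord i == 0) ==> (wv u i != 2)] &&
  [forall i : 'I_n, forall j : 'I_n, ((i < j) && (wv u i == 0)) ==> (wv u j != 1)] by [].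
apply: (iffP andP) => [[/forallP h1 /forallP h2]|[h1 h2]]; split.
- move=> i i0; have := h1 i; rewrite i0 /= => /eqP h; have := wv_le2 u i; lia.
- move=> i j ij u0; have /forallP := h2 i => /(_ j); rewrite ij u0 /=.
  by move/eqP.
- apply/forallP => i; apply/implyP => /eqP i0; have := h1 i i0 => h; apply/eqP => e; lia.
- apply/forallP => i; apply/forallP => j; apply/implyP => /andP [ij /eqP u0].
  by apply/eqP; exact: (h2 i j ij u0).
Qed.

Definition mkw n (f : 'I_n -> nat) : word n := [ffun i => inord (f i)].

Lemma mkwE n (f : 'I_n -> nat) i : f i <= 2 -> wv (mkw f) i = f i.
Proof. by move=> h; rewrite /wv /mkw ffunE; exact: (@inordK 2 _ h). Qed.

Lemma wle_refl n (u : word n) : wle u u.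
Proof. by apply/wleP. Qed.

Lemma wle_anti n (u v : word n) : wle u v -> wle v u -> u = v.
Proof.
move=> /wleP h1 /wleP h2; apply: weqP => i; have := h1 i; have := h2 i; lia.
Qed.

Lemma wle_trans n (u v w : word n) : wle u v -> wle v w -> wle u w.
Proof.
move=> /wleP h1 /wleP h2; apply/wleP => i; have := h1 i; have := h2 i; lia.
Qed.

Definition wsum n (u : word n) := \sum_(i < n) wv u i.

Lemma wlt_sum n (u v : word n) : wle u v -> u != v -> wsum u < wsum v.
Proof.
move=> /wleP h ne.
have [i hi] : exists i, wv u i < wv v i.
  apply/existsP; apply: contraNT ne; rewrite negb_exists => /forallP h2.
  apply/eqP; apply: weqP => i; have := h i; have := h2 i; lia.
rewrite /wsum (bigD1 i) //= [X in _ < X](bigD1 i) //= -addSn leq_add //.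
by apply: leq_sum => j _; apply: h.
Qed.

Lemma inTr n (u : word n) : (u \in Tr n) = triword u.
Proof. by rewrite inE. Qed.

Definition jn n (u v : word n) : word n := mkw (fun i => maxn (wv u i) (wv v i)).

Lemma jnE n (u v : word n) i : wv (jn u v) i = maxn (wv u i) (wv v i).
Proof. by rewrite mkwE // geq_max !wv_le2. Qed.

Lemma jn_tri n (u v : word n) : triword u -> triword v -> triword (jn u v).
Proof.
move=> /triP [hu1 hu2] /triP [hv1 hv2]; apply/triP; split.
- by move=> i i0; rewrite jnE geq_max hu1 ?hv1.
- move=> i j ij; rewrite !jnE => e.
  have ui : wv u i = 0 by lia.
  have vi : wv v i = 0 by lia.
  have := hu2 i j ij ui; have := hv2 i j ij vi; have := wv_le2 u j; have := wv_le2 v j.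
  lia.
Qed.

Lemma jn_ub1 n (u v : word n) : wle u (jn u v).
Proof. by apply/wleP => i; rewrite jnE leq_maxl. Qed.

Lemma jn_ub2 n (u v : word n) : wle v (jn u v).
Proof. by apply/wleP => i; rewrite jnE leq_maxr. Qed.

Lemma jn_least n (u v w : word n) : wle u w -> wle v w -> wle (jn u v) w.
Proof. by move=> /wleP h1 /wleP h2; apply/wleP => i; rewrite jnE geq_max h1 h2. Qed.

Definition bot n : word n := mkw (fun _ => 0).

Lemma botE n (i : 'I_n) : wv (bot n) i = 0.
Proof. by rewrite mkwE. Qed.

Lemma bot_tri n : triword (bot n).
Proof. by apply/triP; split => [i _|i j _ _]; rewrite botE. Qed.

Lemma bot_le n (u : word n) : wle (bot n) u.
Proof. by apply/wleP => i; rewrite botE. Qed.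

Lemma meet_exists n (u v : word n) : exists m, is_meet (Tr n) (@wle n) u v m.
Proof.
have P0 : (bot n \in Tr n) && wle (bot n) u && wle (bot n) v.
  by rewrite inTr bot_tri !bot_le.
case: (@arg_maxnP _ (bot n) (fun z => (z \in Tr n) && wle z u && wle z v) (@wsum n) P0) => m /andP [/andP [Sm mu] mv] mx.
exists m; split => // z Sz zu zv.
set w := jn m z.
have Pw : (w \in Tr n) && wle w u && wle w v.
  by rewrite inTr jn_tri -?inTr // !jn_least.
have := mx w Pw.
case: (eqVneq m w) => [->|ne]; first by rewrite jn_ub2.
by move=> /= h; have := wlt_sum (jn_ub1 m z) ne; rewrite ltnNge h.
Qed.

Lemma lattice_Tr n : is_finite_lattice (Tr n) (@wle n).
Proof.
split.
- split; first by move=> x _; apply: wle_refl.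
  split; first by move=> x y _ _; apply: wle_anti.
  by move=> x y z _ _ _; apply: wle_trans.
- by apply/set0Pn; exists (bot n); rewrite inTr bot_tri.
- move=> x y Sx Sy; exists (jn x y); split; rewrite ?jn_ub1 ?jn_ub2 //.
  + by rewrite inTr jn_tri -?inTr.
  + by move=> z _; apply: jn_least.
- by move=> x y _ _; apply: meet_exists.
Qed.

Lemma cover_below n (x y : word n) : x \in Tr n -> y \in Tr n -> wle y x -> y != x ->
  exists z, covers (Tr n) (@wle n) x z && wle y z.
Proof.
move=> Sx Sy yx ne.
have P0 : (y \in Tr n) && wle y y && wle y x && (y != x) by rewrite Sy wle_refl yx ne.
case: (@arg_maxnP _ y (fun z => (z \in Tr n) && wle y z && wle z x && (z != x)) (@wsum n) P0)
  => m /andP [/andP [/andP [Sm ym] mx] mne] mmax.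
exists m; rewrite ym andbT /covers Sm Sx mx mne /=.
apply/forallP => w; apply/negP => /and5P [Sw mw wx wm wne].
have Pw : (w \in Tr n) && wle y w && wle w x && (w != x) by rewrite Sw wx wne (wle_trans ym mw).
have := mmax w Pw; rewrite /= leqNgt wlt_sum //.
by rewrite eq_sym.
Qed.

Lemma cover_above n (x y : word n) : x \in Tr n -> y \in Tr n -> wle x y -> x != y ->
  exists z, covers (Tr n) (@wle n) z x && wle z y.
Proof.
move=> Sx Sy xy ne.
have P0 : (y \in Tr n) && wle x y && wle y y && (x != y) by rewrite Sy wle_refl xy ne.
case: (@arg_minnP _ y (fun z => (z \in Tr n) && wle x z && wle z y && (x != z)) (@wsum n) P0)
  => m /andP [/andP [/andP [Sm xm] my] mne] mmin.
exists m; rewrite my andbT /covers Sm Sx xm mne /=.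
apply/forallP => w; apply/negP => /and5P [Sw xw wm wx wm'].
have Pw : (w \in Tr n) && wle x w && wle w y && (x != w)
  by rewrite Sw xw (wle_trans wm my) eq_sym wx.
have := mmin w Pw; rewrite /= leqNgt wlt_sum //.
Qed.

Lemma ji_of n (x c : word n) : x \in Tr n -> c \in Tr n -> wle c x -> c != x ->
  (forall y, y \in Tr n -> wle y x -> y != x -> wle y c) ->
  join_irreducible (Tr n) (@wle n) x.
Proof.
move=> Sx Sc cx cne h; rewrite /join_irreducible Sx /=.
suff -> : [set y | covers (Tr n) (@wle n) x y] = [set c] by rewrite cards1.
apply/setP => y; rewrite !inE; apply/idP/eqP.
- move=> /and5P [Sy _ yx yne /forallP hz].
  have yc := h y Sy yx yne.
  case: (eqVneq y c) => // ne; have := hz c.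
  by rewrite Sc yc cx eq_sym ne cne.
- move=> ->; rewrite /covers Sc Sx cx cne /=.
  apply/forallP => z; apply/negP => /and5P [Sz cz zx zc zx'].
  have := h z Sz zx zx' => zc'.
  by move: zc; rewrite (wle_anti zc' cz) eqxx.
Qed.

Lemma not_ji_two n (x y1 y2 : word n) : x \in Tr n -> y1 \in Tr n -> y2 \in Tr n ->
  wle y1 x -> y1 != x -> wle y2 x -> y2 != x ->
  (forall z, wle y1 z -> wle y2 z -> wle x z) ->
  ~~ join_irreducible (Tr n) (@wle n) x.
Proof.
move=> Sx S1 S2 l1 n1 l2 n2 h.
have [z1 /andP [c1 yz1]] := cover_below Sx S1 l1 n1.
have [z2 /andP [c2 yz2]] := cover_below Sx S2 l2 n2.
rewrite /join_irreducible negb_and; apply/orP; right.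
suff : 1 < #|[set y | covers (Tr n) (@wle n) x y]| by case: (#|_|) => [|[|]].
apply/card_gt1P; exists z1, z2; rewrite !inE c1 c2; split => //.
apply/negP => /eqP e; subst z2.
move: c1 => /and5P [_ _ zx zne _].
have := h z1 yz1 yz2 => xz.
by move: zne; rewrite (wle_anti zx xz) eqxx.
Qed.

Lemma mi_of n (x c : word n) : x \in Tr n -> c \in Tr n -> wle x c -> x != c ->
  (forall y, y \in Tr n -> wle x y -> x != y -> wle c y) ->
  meet_irreducible (Tr n) (@wle n) x.
Proof.
move=> Sx Sc xc cne h; rewrite /meet_irreducible Sx /=.
suff -> : [set y | covers (Tr n) (@wle n) y x] = [set c] by rewrite cards1.
apply/setP => y; rewrite !inE; apply/idP/eqP.
- move=> /and5P [_ Sy xy yne /forallP hz].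
  have cy := h y Sy xy yne.
  case: (eqVneq y c) => // ne; have := hz c.
  by rewrite Sc cy xc (eq_sym c x) cne (eq_sym c y) ne.
- move=> ->; rewrite /covers Sc Sx xc cne /=.
  apply/forallP => z; apply/negP => /and5P [Sz xz zc zx zc'].
  have := h z Sz xz; rewrite eq_sym => /(_ zx) cz.
  by move: zc'; rewrite (wle_anti zc cz) eqxx.
Qed.

Lemma not_mi_two n (x y1 y2 : word n) : x \in Tr n -> y1 \in Tr n -> y2 \in Tr n ->
  wle x y1 -> x != y1 -> wle x y2 -> x != y2 ->
  (forall z, wle z y1 -> wle z y2 -> wle z x) ->
  ~~ meet_irreducible (Tr n) (@wle n) x.
Proof.
move=> Sx S1 S2 l1 n1 l2 n2 h.
have [z1 /andP [c1 yz1]] := cover_above Sx S1 l1 n1.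
have [z2 /andP [c2 yz2]] := cover_above Sx S2 l2 n2.
rewrite /meet_irreducible negb_and; apply/orP; right.
suff : 1 < #|[set y | covers (Tr n) (@wle n) y x]| by case: (#|_|) => [|[|]].
apply/card_gt1P; exists z1, z2; rewrite !inE c1 c2; split => //.
apply/negP => /eqP e; subst z2.
move: c1 => /and5P [_ _ xz zne _].
have := h z1 yz1 yz2 => zx.
by move: zne; rewrite (wle_anti zx xz) eqxx.
Qed.

Lemma bot_not_ji n : ~~ join_irreducible (Tr n) (@wle n) (bot n).
Proof.
rewrite /join_irreducible negb_and; apply/orP; right.
suff -> : [set y | covers (Tr n) (@wle n) (bot n) y] = set0 by rewrite cards0.
apply/setP => y; rewrite !inE; apply/negP => /and5P [_ _ yb ne _].
by move: ne; rewrite (wle_anti yb (bot_le y)) eqxx.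
Qed.

Ltac crush := repeat (case: ifP => ?); try lia.

Definition topw n : word n := mkw (fun i => if nat_of_ord i == 0 then 1 else 2).

Lemma topE n (i : 'I_n) : wv (topw n) i = if nat_of_ord i == 0 then 1 else 2.
Proof. by rewrite mkwE //; crush. Qed.

Lemma top_tri n : triword (topw n).
Proof.
apply/triP; split => [i i0|i j ij]; rewrite !topE; crush.
Qed.

Lemma le_top n (x : word n) : x \in Tr n -> wle x (topw n).
Proof.
rewrite inTr => /triP [h1 _]; apply/wleP => i; rewrite topE.
have := wv_le2 x i; case: eqP => [/h1|]; lia.
Qed.

Lemma top_not_mi n : ~~ meet_irreducible (Tr n) (@wle n) (topw n).
Proof.
rewrite /meet_irreducible negb_and; apply/orP; right.
suff -> : [set y | covers (Tr n) (@wle n) y (topw n)] = set0 by rewrite cards0.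
apply/setP => y; rewrite !inE; apply/negP => /and5P [_ Sy ty ne _].
by move: ne; rewrite (wle_anti ty (le_top Sy)) eqxx.
Qed.

Definition dec n (x : word n) (p : 'I_n) : word n :=
  mkw (fun i => if i == p then
     (if wv x p == 2 then (if [exists j : 'I_n, (j < p) && (wv x j == 0)] then 0 else 1) else 0)
     else wv x i).

Definition validdec n (x : word n) (p : 'I_n) :=
  (wv x p == 2) || ((wv x p == 1) && [forall j : 'I_n, (p < j) ==> (wv x j != 1)]).

Lemma decE n (x : word n) p i : wv (dec x p) i = if i == p then
     (if wv x p == 2 then (if [exists j : 'I_n, (j < p) && (wv x j == 0)] then 0 else 1) else 0)
     else wv x i.
Proof. by rewrite mkwE //; have := wv_le2 x i; crush. Qed.

Lemma dec_tri n (x : word n) p : triword x -> validdec x p -> triword (dec x p).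
Proof.
move=> /triP [h1 h2] hv; apply/triP; split.
- move=> i i0; rewrite decE; have := h1 i i0; crush.
- move=> i j ij; rewrite !decE.
  case: (eqVneq i p) => [eip|nip].
    subst i.
    have -> : (j == p) = false by apply/eqP => e; move: ij; rewrite e ltnn.
    move: hv; rewrite /validdec; case: eqP => [x2 _|nx2 /= /andP [x1 /forallP hf]].
      case: ifP => // /existsP [j0 /andP [j0p /eqP xj0]] _.
      by apply: (h2 j0 j) => //; apply: ltn_trans ij.
    move=> _; apply/eqP; have := hf j; rewrite ij //=.
  move=> xi.
  case: (eqVneq j p) => [ejp|njp].
    subst j.
    case: ifP => // _; case: ifP => // /negbT; rewrite negb_exists => /forallP /(_ i).
    by rewrite xi eqxx andbT ij.
  exact: (h2 i j ij xi).
Qed.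

Lemma dec_le n (x : word n) p : validdec x p -> wle (dec x p) x.
Proof.
move=> hv; apply/wleP => i; rewrite decE.
case: (eqVneq i p) => [->|]; last by [].
move: hv; rewrite /validdec; have := wv_le2 x p; case: eqP => [e|ne] /=; crush.
Qed.

Lemma dec_ne n (x : word n) p : validdec x p -> dec x p != x.
Proof.
move=> hv; apply/negP => /eqP e; have : wv (dec x p) p = wv x p by rewrite e.
rewrite decE eqxx.
move: hv; rewrite /validdec; have := wv_le2 x p; case: eqP => [e2|ne] /=; crush.
Qed.

Lemma dec_join n (x : word n) p q z : p != q ->
  wle (dec x p) z -> wle (dec x q) z -> wle x z.
Proof.
move=> pq /wleP h1 /wleP h2; apply/wleP => i.
have := h1 i; have := h2 i; rewrite !decE.
case: (eqVneq i p) => [->|nip].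
  by rewrite (negbTE pq).
by move=> _.
Qed.

Definition gJ n (p : 'I_n * bool) : word n :=
  mkw (fun i => if p.2 then (if i == p.1 then 2 else 0) else (if i <= p.1 then 1 else 0)).
Definition gJc n (p : 'I_n * bool) : word n :=
  mkw (fun i => if p.2 then 0 else (if i < p.1 then 1 else 0)).
Definition Dset n := [set p : 'I_n * bool | ~~ (p.2 && (nat_of_ord p.1 == 0))].

Lemma gJE n (p : 'I_n * bool) i :
  wv (gJ p) i = if p.2 then (if i == p.1 then 2 else 0) else (if i <= p.1 then 1 else 0).
Proof. by rewrite mkwE //; crush. Qed.

Lemma gJcE n (p : 'I_n * bool) i :
  wv (gJc p) i = if p.2 then 0 else (if i < p.1 then 1 else 0).
Proof. by rewrite mkwE //; crush. Qed.

Definition o0_of n (k : 'I_n) : 'I_n := Ordinal (leq_ltn_trans (leq0n k) (ltn_ord k)).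

Lemma gJ_tri n (p : 'I_n * bool) : p \in Dset n -> triword (gJ p).
Proof.
case: p => k b; rewrite inE /= => hk; apply/triP; split.
- move=> i i0; rewrite gJE /=; case: b hk => /= hk; last by crush.
  by case: (eqVneq i k) => [e|]; [move: hk; rewrite -e i0|].
- move=> i j ij; rewrite !gJE /=; case: b hk => /= hk; crush.
Qed.

Lemma gJc_tri n (p : 'I_n * bool) : triword (gJc p).
Proof.
case: p => k b; apply/triP; split.
- move=> i i0; rewrite gJcE /=; crush.
- move=> i j ij; rewrite !gJcE /=; crush.
Qed.

Lemma gJ_ji n (p : 'I_n * bool) : p \in Dset n -> join_irreducible (Tr n) (@wle n) (gJ p).
Proof.
move=> pD; have Sg := gJ_tri pD; move: pD.
case: p Sg => k b Sg; rewrite inE /= => hk.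
apply: (@ji_of _ _ (gJc (k, b))); rewrite ?inTr ?gJc_tri //.
- by apply/wleP => i; rewrite gJE gJcE; case: b {hk Sg} => /=; crush.
- apply/negP => /eqP e; have := congr1 (fun w => wv w k) e.
  by rewrite gJE gJcE /= ltnn leqnn eqxx; case: b {hk Sg e}.
move=> y; rewrite inTr => /triP [h1 h2] /wleP hy yne; apply/wleP => i.
case: b hk hy yne Sg => /= hk hy yne Sg.
- have yk : wv y k = 0.
    have := hy k; rewrite gJE /= eqxx; have := wv_le2 y k.
    case: (eqVneq (wv y k) 2) => [y2|yn2].
      move: yne; rewrite (_ : y = gJ (k, true)) ?eqxx //.
      apply: weqP => j; rewrite gJE /=; case: (eqVneq j k) => [->//|jk].
      by have := hy j; rewrite gJE /= (negbTE jk); lia.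
    case: (eqVneq (wv y k) 1) => [y1|yn1]; last by lia.
    have o0k : o0_of k < k by rewrite /= lt0n.
    have := h2 _ _ o0k; rewrite y1 => h; exfalso; apply: h => //.
    have := hy (o0_of k); rewrite gJE /=.
    have -> : (o0_of k == k) = false by apply/negbTE; rewrite -val_eqE /= eq_sym.
    lia.
  rewrite gJcE /=; have := hy i; rewrite gJE /=.
  by case: (eqVneq i k) => [->|]; [rewrite yk|].
- have yk : wv y k = 0.
    have := hy k; rewrite gJE /= leqnn.
    case: (eqVneq (wv y k) 0) => [//|yk0 yk1].
    have y1 : wv y k = 1 by lia.
    move: yne; rewrite (_ : y = gJ (k, false)) ?eqxx //.
    apply: weqP => j; rewrite gJE /=.
    have := hy j; rewrite gJE /=.
    case: (ltngtP j k) => [jk|jk|/val_inj ->]; last by rewrite y1 leqnn.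
      move=> h; have := h2 j k jk; rewrite y1 => h'.
      case: (eqVneq (wv y j) 0) => [e|]; [by case: (h' e)|lia].
    lia.
  rewrite gJcE /=; have := hy i; rewrite gJE /=.
  case: (ltngtP i k) => [ik|ik|/val_inj ->]; last by rewrite yk.
    by [].
  by [].
Qed.

Lemma last1 n (x : word n) q : wv x q = 1 -> exists q', validdec x q' /\ wv x q' = 1.
Proof.
move=> e.
case: (@arg_maxnP _ q (fun i => wv x i == 1) (fun i : 'I_n => nat_of_ord i) (introT eqP e))
  => m /eqP m1 mmax.
exists m; split => //; rewrite /validdec m1 /=.
apply/forallP => j; apply/implyP => mj; apply/eqP => e1.
by have := mmax j (introT eqP e1); rewrite /= leqNgt mj.
Qed.

Lemma ji_classify n (x : word n) : triword x ->
  x = bot n \/ (exists p, p \in Dset n /\ x = gJ p) \/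
  (exists p q, [/\ p != q, validdec x p & validdec x q]).
Proof.
move=> tx; have /triP [h1 h2] := tx.
case: (pickP (fun i => wv x i == 2)) => [p /eqP x2|no2].
- case: (pickP (fun i => wv x i == 1)) => [q /eqP x1|no1].
  + have [q' [vq' xq']] := last1 x1.
    right; right; exists p, q'; split => //; last by rewrite /validdec x2.
    by apply/eqP => e; subst; lia.
  + case: (pickP (fun i => (i != p) && (wv x i == 2))) => [q /andP [qp /eqP xq]| no22].
    * by right; right; exists q, p; split; rewrite // /validdec ?xq ?x2.
    * right; left; exists (p, true); split.
      - by rewrite inE /=; apply/negP => /eqP p0; have := h1 p p0; lia.
      - apply: weqP => i; rewrite gJE /=; case: (eqVneq i p) => [->//|ip].
        have := no1 i; have := no22 i; rewrite ip /=; have := wv_le2 x i; lia.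
- case: (pickP (fun i => wv x i == 1)) => [q /eqP x1|no1].
  + have [q' [vq' xq']] := last1 x1.
    right; left; exists (q', false); split; first by rewrite inE.
    apply: weqP => i; rewrite gJE /=.
    case: (ltngtP i q') => [iq|iq|/val_inj ->]; last by rewrite xq'.
      have := h2 i q' iq; rewrite xq' => h; have := no2 i; have := wv_le2 x i.
      case: (eqVneq (wv x i) 0) => [e|]; [by case: (h e)|lia].
    move: vq'; rewrite /validdec xq' /= => /forallP /(_ i); rewrite iq /= => /eqP h.
    have := no2 i; have := wv_le2 x i; lia.
  + left; apply: weqP => i; rewrite botE; have := no1 i; have := no2 i; have := wv_le2 x i.
    lia.
Qed.

Lemma gJ_inj n : injective (@gJ n).
Proof.
move=> [k b] [k' b'] e.
have E i : wv (gJ (k, b)) i = wv (gJ (k', b')) i by rewrite e.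
case: b b' e E => [] [] _ E.
- by have := E k; rewrite !gJE /= eqxx; case: eqP => [->|].
- have := E (o0_of k); rewrite !gJE /=; crush.
- have := E (o0_of k'); rewrite !gJE /=; case: ifP => _ //; case: ifP => _ //.
- have h1 := E k; have h2 := E k'; rewrite !gJE /= !leqnn in h1 h2.
  move: h1 h2; case: leqP => // ?; case: leqP => // ? _ _.
  by congr (_, _); apply: val_inj; apply/eqP; rewrite eqn_leq; apply/andP; split.
Qed.

Lemma card_Dset n : 0 < n -> #|Dset n| = (n * 2).-1.
Proof.
move=> n0; pose o : 'I_n := Ordinal n0.
have -> : Dset n = [set~ (o, true)].
  apply/setP => [[k b]]; rewrite !inE /= xpair_eqE.
  case: b; rewrite /= ?andbT ?andbF //.
by rewrite cardsC1 card_prod card_ord card_bool.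
Qed.

Lemma ji_set n : [set x | join_irreducible (Tr n) (@wle n) x] = (@gJ n) @: Dset n.
Proof.
apply/setP => x; rewrite inE.
apply/idP/idP.
- move=> hx; have Sx : x \in Tr n by case/andP: hx.
  have := Sx; rewrite inTr => tx.
  case: (ji_classify tx) => [e|[[p [pD ->]]|[p [q [pq vp vq]]]]].
  + by move: hx; rewrite e (negbTE (bot_not_ji n)).
  + by apply: imset_f.
  + have S1 : dec x p \in Tr n by rewrite inTr dec_tri.
    have S2 : dec x q \in Tr n by rewrite inTr dec_tri.
    have := not_ji_two Sx S1 S2 (dec_le vp) (dec_ne vp) (dec_le vq) (dec_ne vq)
      (fun z h1 h2 => dec_join pq h1 h2).
    by rewrite hx.
- by case/imsetP => p pD ->; apply: gJ_ji.
Qed.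

Definition nonfull n (x : word n) (p : 'I_n) := wv x p != (if nat_of_ord p == 0 then 1 else 2).

Definition inc n (x : word n) (p : 'I_n) : word n :=
  mkw (fun i => if i == p then
    (if wv x p == 1 then 2 else if [exists j : 'I_n, (j < p) && (wv x j == 0)] then 2 else 1)
    else wv x i).

Lemma incE n (x : word n) p i : wv (inc x p) i = if i == p then
    (if wv x p == 1 then 2 else if [exists j : 'I_n, (j < p) && (wv x j == 0)] then 2 else 1)
    else wv x i.
Proof. by rewrite mkwE //; have := wv_le2 x i; crush. Qed.

Lemma nonfull_val n (x : word n) p : triword x -> nonfull x p ->
  wv x p = 0 \/ (wv x p = 1 /\ nat_of_ord p != 0).
Proof.
move=> /triP [h1 _]; rewrite /nonfull; have := wv_le2 x p.
case: (eqVneq (nat_of_ord p) 0) => [p0|pn0] /=.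
  by have := h1 p p0; lia.
lia.
Qed.

Lemma inc_tri n (x : word n) p : triword x -> nonfull x p -> triword (inc x p).
Proof.
move=> tx nf; have /triP [h1 h2] := tx; have hv := nonfull_val tx nf.
apply/triP; split.
- move=> i i0; rewrite incE; case: (eqVneq i p) => [e|ip]; last exact: h1.
  subst i; case: ifP => [/eqP x1|_]; first by lia.
  case: ifP => // /existsP [j /andP [jp _]]; lia.
- move=> i j ij; rewrite !incE.
  case: (eqVneq i p) => [e|ip]; first by crush.
  move=> xi; case: (eqVneq j p) => [e|jp]; last exact: (h2 i j ij xi).
  subst j; case: ifP => // _; case: ifP => // /negbT; rewrite negb_exists.
  by move=> /forallP /(_ i); rewrite ij xi eqxx.
Qed.

Lemma inc_ge n (x : word n) p : triword x -> nonfull x p -> wle x (inc x p).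
Proof.
move=> tx nf; have hv := nonfull_val tx nf; apply/wleP => i; rewrite incE.
case: (eqVneq i p) => [->|]; last by [].
crush.
Qed.

Lemma inc_ne n (x : word n) p : triword x -> nonfull x p -> x != inc x p.
Proof.
move=> tx nf; have hv := nonfull_val tx nf; apply/negP => /eqP e.
have : wv x p = wv (inc x p) p by rewrite -e.
rewrite incE eqxx; crush.
Qed.

Lemma inc_meet n (x : word n) p q z : p != q ->
  wle z (inc x p) -> wle z (inc x q) -> wle z x.
Proof.
move=> pq /wleP h1 /wleP h2; apply/wleP => i.
have := h1 i; have := h2 i; rewrite !incE.
case: (eqVneq i p) => [->|nip].
  by rewrite (negbTE pq).
by move=> _.
Qed.

Definition gM n (p : 'I_n * bool) : word n :=
  mkw (fun i => if i == p.1 then nat_of_bool p.2 else (if nat_of_ord i == 0 then 1 else 2)).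
Definition gMc n (p : 'I_n * bool) : word n :=
  mkw (fun i => if i == p.1 then (nat_of_bool p.2).+1 else (if nat_of_ord i == 0 then 1 else 2)).

Lemma gME n (p : 'I_n * bool) i :
  wv (gM p) i = if i == p.1 then nat_of_bool p.2 else (if nat_of_ord i == 0 then 1 else 2).
Proof. by rewrite mkwE //; case: (p.2); crush. Qed.

Lemma gMcE n (p : 'I_n * bool) i :
  wv (gMc p) i = if i == p.1 then (nat_of_bool p.2).+1 else (if nat_of_ord i == 0 then 1 else 2).
Proof. by rewrite mkwE //; case: (p.2); crush. Qed.

Lemma mi_classify n (x : word n) : triword x ->
  x = topw n \/ (exists p, p \in Dset n /\ x = gM p) \/
  (exists p q, [/\ p != q, nonfull x p & nonfull x q]).
Proof.
move=> tx; have /triP [h1 h2] := tx.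
case: (pickP (nonfull x)) => [p np|none].
- case: (pickP (fun q => (q != p) && nonfull x q)) => [q /andP [qp nq]|none2].
    by right; right; exists q, p.
  right; left; exists (p, wv x p == 1); split.
    rewrite inE /=; have := nonfull_val tx np; case=> [->//|[-> /negbTE ->]] //.
  apply: weqP => i; rewrite gME /=; case: (eqVneq i p) => [->|ip].
    by have := nonfull_val tx np; case=> [->|[-> _]].
  have := none2 i; rewrite /= ip /= /nonfull => /negbFE /eqP.
  by case: ifP.
- left; apply: weqP => i; rewrite topE; have := none i; rewrite /= /nonfull => /negbFE /eqP.
  by case: ifP.
Qed.

Lemma gM_tri n (p : 'I_n * bool) : p \in Dset n -> triword (gM p).
Proof.
case: p => k b; rewrite inE /= => hk; apply/triP; split.
- move=> i i0; rewrite gME /=; case: (eqVneq i k) => _; first by case: (b).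
  by rewrite i0.
- move=> i j ij; rewrite !gME /=.
  case: (eqVneq j k) => [e|jk].
    subst j; case: (eqVneq i k) => [e|ik]; first by subst i; rewrite ltnn in ij.
    by crush.
  have j0 : (nat_of_ord j == 0) = false by apply/eqP; lia.
  by rewrite j0; case: ifP.
Qed.

Lemma gMc_tri n (p : 'I_n * bool) : p \in Dset n -> triword (gMc p).
Proof.
case: p => k b; rewrite inE /= => hk; apply/triP; split.
- move=> i i0; rewrite gMcE /=; case: (eqVneq i k) => [e|_].
    by subst i; move: hk; rewrite i0 /=; case: (b).
  by rewrite i0.
- move=> i j ij; rewrite !gMcE /=; crush.
Qed.

Lemma gM_mi n (p : 'I_n * bool) : p \in Dset n -> meet_irreducible (Tr n) (@wle n) (gM p).
Proof.
move=> pD; have Sg := gM_tri pD; have Sc := gMc_tri pD; move: pD.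
case: p Sg Sc => k b Sg Sc; rewrite inE /= => hk.
apply: (@mi_of _ _ (gMc (k, b))); rewrite ?inTr //.
- by apply/wleP => i; rewrite gME gMcE; case: ifP.
- apply/negP => /eqP e; have := congr1 (fun w => wv w k) e.
  by rewrite gME gMcE /= eqxx; case: (b).
move=> y Sy /wleP hy yne; apply/wleP => i.
have yk : (nat_of_bool b).+1 <= wv y k.
  have := hy k; rewrite gME /= eqxx.
  case: (ltngtP (nat_of_bool b) (wv y k)) => // e _.
  move: yne; rewrite (_ : y = gM (k, b)) ?eqxx //.
  apply: weqP => j; rewrite gME /=; case: (eqVneq j k) => [->//|jk].
  have /wleP := le_top Sy => /(_ j); rewrite topE.
  by have := hy j; rewrite gME /= (negbTE jk); lia.
rewrite gMcE /=; case: (eqVneq i k) => [->//|ik].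
by have := hy i; rewrite gME /= (negbTE ik).
Qed.

Lemma gM_inj n : {in Dset n &, injective (@gM n)}.
Proof.
move=> [k b] [k' b']; rewrite !inE /= => hk hk' e.
have E i : wv (gM (k, b)) i = wv (gM (k', b')) i by rewrite e.
have := E k; rewrite !gME /= eqxx.
case: (eqVneq k k') => [ekk|nkk].
  by subst k'; case: (b) (b') => [] [].
move: hk; case: (b) => //=; case: ifP => // /eqP -> //.
Qed.

Lemma mi_set n : [set x | meet_irreducible (Tr n) (@wle n) x] = (@gM n) @: Dset n.
Proof.
apply/setP => x; rewrite inE.
apply/idP/idP.
- move=> hx; have Sx : x \in Tr n by case/andP: hx.
  have := Sx; rewrite inTr => tx.
  case: (mi_classify tx) => [e|[[p [pD ->]]|[p [q [pq vp vq]]]]].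
  + by move: hx; rewrite e (negbTE (top_not_mi n)).
  + by apply: imset_f.
  + have S1 : inc x p \in Tr n by rewrite inTr inc_tri.
    have S2 : inc x q \in Tr n by rewrite inTr inc_tri.
    have := not_mi_two Sx S1 S2 (inc_ge tx vp) (inc_ne tx vp) (inc_ge tx vq) (inc_ne tx vq)
      (fun z h1 h2 => inc_meet pq h1 h2).
    by rewrite hx.
- by case/imsetP => p pD ->; apply: gM_mi.
Qed.

Lemma path_iota (r : rel nat) a m : (forall k, a <= k < a + m -> r k k.+1) ->
  path r a (iota a.+1 m).
Proof.
elim: m a => [//|m IH] a h /=; apply/andP; split.
  by apply: h; rewrite leqnn addnS ltnS leq_addr.
by apply: IH => k /andP [h1 h2]; apply: h; rewrite (ltnW h1) /= addnS -addSn.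
Qed.

Lemma last_iota a m : last a (iota a.+1 m) = a + m.
Proof. by elim: m a => [|m IH] a /=; rewrite ?addn0 // IH addSnnS. Qed.

Lemma cover_step n (x y : word n) p : x \in Tr n -> y \in Tr n ->
  wv y p = (wv x p).+1 -> (forall i, i != p -> wv y i = wv x i) ->
  covers (Tr n) (@wle n) y x.
Proof.
move=> Sx Sy hp ho.
have xy : wle x y.
  by apply/wleP => i; case: (eqVneq i p) => [->|ip]; rewrite ?hp ?ho.
have nxy : x != y.
  by apply/negP => /eqP e; move: hp; rewrite e; lia.
rewrite /covers Sx Sy xy nxy /=.
apply/forallP => z; apply/negP => /and5P [Sz /wleP xz /wleP zy zx zy'].
have hz : forall i, i != p -> wv z i = wv x i.
  by move=> i ip; have := xz i; have := zy i; rewrite ho //; lia.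
have := xz p; have := zy p; rewrite hp => h1 h2.
case: (eqVneq (wv z p) (wv x p)) => [e|ne].
  move: zx; rewrite (_ : z = x) ?eqxx //; apply: weqP => i.
  by case: (eqVneq i p) => [->//|]; apply: hz.
move: zy'; rewrite (_ : z = y) ?eqxx //; apply: weqP => i.
case: (eqVneq i p) => [->|ip]; first by lia.
by rewrite hz // ho.
Qed.

Definition cw n (k : nat) : word n :=
  mkw (fun i => if k <= n then (if i < k then 1 else 0)
                else (if (0 < nat_of_ord i) && (n * 2 - k <= i) then 2 else 1)).

Lemma cwE n k (i : 'I_n) : wv (cw n k) i = if k <= n then (if i < k then 1 else 0)
                else (if (0 < nat_of_ord i) && (n * 2 - k <= i) then 2 else 1).
Proof. by rewrite mkwE //; crush. Qed.

Lemma cw_tri n k : triword (cw n k).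
Proof.
apply/triP; split.
- move=> i i0; rewrite cwE; rewrite i0; crush.
- move=> i j ij; rewrite !cwE; crush.
Qed.

Lemma cw_cover n k : k.+1 < n * 2 -> covers (Tr n) (@wle n) (cw n k.+1) (cw n k).
Proof.
move=> hk.
have hp : (if k < n then k else n * 2 - k.+1) < n by case: ifP => ?; lia.
apply: (@cover_step _ _ _ (Ordinal hp)); rewrite ?inTr ?cw_tri //.
  rewrite !cwE /=; clear hp; case: (ltnP k n) => kn /=; crush.
move=> i; have := ltn_ord i; rewrite -val_eqE /= !cwE /=; clear hp; case: (ltnP k n) => kn /=; crush.
Qed.

Lemma cw0 n : cw n 0 = bot n.
Proof. by apply: weqP => i; rewrite !cwE. Qed.

Lemma cw_top n : 0 < n -> cw n (n * 2).-1 = topw n.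
Proof. move=> n0; apply: weqP => i; have := ltn_ord i; rewrite cwE topE; crush. Qed.

Lemma path_sum n (x : word n) s : path (fun a b => covers (Tr n) (@wle n) b a) x s ->
  wsum x + size s <= wsum (last x s).
Proof.
elim: s x => [|y s IH] x /=; first by rewrite addn0.
case/andP => /and5P [_ _ xy nxy _] hp.
have := IH y hp; have := wlt_sum xy nxy => h1 h2; apply: leq_trans h2; by rewrite addnS ltn_add2r.
Qed.

Lemma wsum_top n : 0 < n -> wsum (topw n) = (n * 2).-1.
Proof.
case: n => [//|n] _; rewrite /wsum big_ord_recl topE /=.
rewrite (eq_bigr (fun _ => 2)); last by move=> i _; rewrite topE.
rewrite sum_nat_const card_ord; lia.
Qed.

Theorem proposition3p2 (n : nat) : 1 <= n -> extremal (Tr n) (@wle n).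
Proof.
move=> n0; split; first exact: lattice_Tr.
exists ((n * 2).-1); split.
- exists (bot n), (topw n); split.
  + by split; [rewrite inTr bot_tri | move=> x _; apply: bot_le].
  + by split; [rewrite inTr top_tri | move=> x; apply: le_top].
  + exists (map (cw n) (iota 1 (n * 2).-1)); split; last by rewrite size_map size_iota.
    rewrite /sat_chain -cw0 path_map last_map last_iota add0n cw_top // eqxx andbT.
    by apply: path_iota => k /andP [_ hk]; apply: cw_cover; lia.
  + move=> s /andP [hp /eqP hl]; have := path_sum hp; rewrite hl wsum_top //; lia.
- by rewrite ji_set card_imset; [exact: card_Dset | exact: gJ_inj].
- by rewrite mi_set card_in_imset; [exact: card_Dset | exact: gM_inj].
Qed.
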